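(* Suppose $\mathbf{X}=\mathbf{D}_1\boldsymbol{\Gamma}_1$, $\boldsymbol{\Gamma}_{i-1}=\mathbf{D}_i\boldsymbol{\Gamma}_i$ for $2\le i\le K$, all $\boldsymbol{\Gamma}_i\neq0$, and $\mathbf{Y}=\mathbf{X}+\mathbf{E}$ with $\|\mathbf{E}\|_{2,\infty}^{p}\le\epsilon_0$. Let $|\Gamma_i^{\min}|,|\Gamma_i^{\max}|$ be the smallest and largest absolute values of the nonzero entries of $\boldsymbol{\Gamma}_i$. Let $\hat{\boldsymbol{\Gamma}}_0=\mathbf{Y}$ and $\hat{\boldsymbol{\Gamma}}_i=\mathcal{S}_{\beta_i}(\mathbf{D}_i^T\hat{\boldsymbol{\Gamma}}_{i-1})$ for $1\le i\le K$ (layered soft thresholding). Define recursively $$\epsilon_i=\sqrt{\|\boldsymbol{\Gamma}_i\|_{0,\infty}^{p}}\,\big(\epsilon_{i-1}+\mu(\mathbf{D}_i)(\|\boldsymbol{\Gamma}_i\|_{0,\infty}^{s}-1)|\Gamma_i^{\max}|+\beta_i\big).$$ Assume that for all $1\le i\le K$: (a) $\|\boldsymbol{\Gamma}_i\|_{0,\infty}^{s}<\tfrac12\Big(1+\tfrac{1}{\mu(\mathbf{D}_i)}\tfrac{|\Gamma_i^{\min}|}{|\Gamma_i^{\max}|}\Big)-\tfrac{1}{\mu(\mathbf{D}_i)}\tfrac{\epsilon_{i-1}}{|\Gamma_i^{\max}|}$; and (b) $|\Gamma_i^{\min}|-(\|\boldsymbol{\Gamma}_i\|_{0,\infty}^{s}-1)\mu(\mathbf{D}_i)|\Gamma_i^{\max}|-\epsilon_{i-1}>\beta_i>\|\boldsymbol{\Gamma}_i\|_{0,\infty}^{s}\mu(\mathbf{D}_i)|\Gamma_i^{\max}|+\epsilon_{i-1}$.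 Then for all $1\le i\le K$: (1) the support of $\hat{\boldsymbol{\Gamma}}_i$ equals that of $\boldsymbol{\Gamma}_i$; and (2) $\|\boldsymbol{\Gamma}_i-\hat{\boldsymbol{\Gamma}}_i\|_{2,\infty}^{p}\le\epsilon_i$.
   Context: Setting. Signals are one-dimensional of length $N$ with periodic boundary conditions; $m_0=1$, $\boldsymbol{\Gamma}_0=\mathbf{X}$. For $i\ge1$, $\boldsymbol{\Gamma}_i\in\mathbb{R}^{Nm_i}$ has entry $km_i+r$ equal to the coefficient of filter $r$ at spatial shift $k$. $\mathbf{D}_i\in\mathbb{R}^{Nm_{i-1}\times Nm_i}$ is a (stride) convolutional dictionary whose column $km_i+r$ is local filter $r$ (length $n_{i-1}m_{i-1}$) placed cyclically on entries $km_{i-1},\dots,km_{i-1}+n_{i-1}m_{i-1}-1$, zero elsewhere. Columns have unit $\ell_2$ norm; $\mu(\mathbf{D})=\max_{i\neq j}|\mathbf{d}_i^T\mathbf{d}_j|$. Stripes: $\mathbf{S}_{i,j}\boldsymbol{\Gamma}_i$ is the subvector of $\boldsymbol{\Gamma}_i$ at spatial shifts $k\in\{j-n_{i-1}+1,\dots,j+n_{i-1}-1\}$ (mod $N$), all channels; $\|\boldsymbol{\Gamma}_i\|_{0,\infty}^{s}=\max_j\|\mathbf{S}_{i,j}\boldsymbol{\Gamma}_i\|_0$. Patches: for $i\ge0$, $\mathbf{P}_{i,j}\mathbf{V}$ extracts from $\mathbf{V}\in\mathbb{R}^{Nm_i}$ the cyclically contiguous subvector at spatial shifts $j,\dots,j+n_i-1$,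 all channels (length $n_im_i$); $\|\mathbf{V}\|_{2,\infty}^{p}=\max_j\|\mathbf{P}_{i,j}\mathbf{V}\|_2$, $\|\mathbf{V}\|_{0,\infty}^{p}=\max_j\|\mathbf{P}_{i,j}\mathbf{V}\|_0$. For $\boldsymbol{\Gamma}_K$ the patch size $n_K$ is an arbitrary fixed choice. Soft thresholding: $\mathcal{S}_\beta$ acts entrywise, $\mathcal{S}_\beta(z)=z+\beta$ if $z<-\beta$, $0$ if $|z|\le\beta$, $z-\beta$ if $z>\beta$. *)

(* Defs.v *)
(* classical reals R.  Vectors are functions nat -> R, only
   the entries with index < length are meaningful. *)
From Stdlib Require Import Reals Arith Bool.
Open Scope R_scope.

Fixpoint sumR (n : nat) (f : nat -> R) : R :=
  match n with O => 0 | S k => sumR k f + f k end.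

(* finite max of f 0 .. f (n-1), with 0 for the empty range
   (only applied to nonnegative quantities) *)
Fixpoint maxR (n : nat) (f : nat -> R) : R :=
  match n with O => 0 | S k => Rmax (maxR k f) (f k) end.

Fixpoint maxN (n : nat) (f : nat -> nat) : nat :=
  match n with O => O | S k => Nat.max (maxN k f) (f k) end.

Definition nz (V : nat -> R) (a : nat) : bool :=
  if Req_EM_T (V a) 0 then false else true.

Fixpoint cnt (n : nat) (P : nat -> bool) (V : nat -> R) : nat :=
  match n with
  | O => O
  | S k => cnt k P V + (if andb (P k) (nz V k) then 1 else 0)%nat
  end.

(* Index a of a vector in R^{N m} (m channels) has spatial shift a / m and
   channel a mod m. *)

(* a lies in patch P_{j}: spatial shift in {j, ..., j+n-1} (mod N) *)
Definition in_patch (N m n j a : nat) : bool :=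
  Nat.ltb ((a / m + N - j) mod N) n.

(* a lies in stripe S_{j}: spatial shift in {j-n+1, ..., j+n-1} (mod N) *)
Definition in_stripe (N m n j a : nat) : bool :=
  orb (Nat.ltb ((a / m + N - j) mod N) n) (Nat.ltb ((j + N - a / m) mod N) n).

Definition norm2p (N m n : nat) (V : nat -> R) : R :=
  maxR N (fun j => sqrt (sumR (N * m)
    (fun a => if in_patch N m n j a then V a ^ 2 else 0))).

Definition norm0p (N m n : nat) (V : nat -> R) : nat :=
  maxN N (fun j => cnt (N * m) (in_patch N m n j) V).

(* ||V||_{0,inf}^s, stripe half-width n (= n_{i-1} for Gamma_i) *)
Definition norm0s (N m n : nat) (V : nat -> R) : nat :=
  maxN N (fun j => cnt (N * m) (in_stripe N m n j) V).

Definition gmax (L : nat) (V : nat -> R) : R := maxR L (fun a => Rabs (V a)).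

Fixpoint minnz_aux (n : nat) (V : nat -> R) (init : R) : R :=
  match n with
  | O => init
  | S k => let r := minnz_aux k V init in
           if nz V k then Rmin (Rabs (V k)) r else r
  end.

(* smallest absolute value of the nonzero entries (meaningful when V <> 0) *)
Definition gmin (L : nat) (V : nat -> R) : R := minnz_aux L V (gmax L V).

(* mutual coherence of a dictionary D with Lr rows and Lc columns,
   D a c = entry in row a, column c *)
Definition mu (Lr Lc : nat) (D : nat -> nat -> R) : R :=
  maxR Lc (fun c => maxR Lc (fun c' =>
    if Nat.eqb c c' then 0 else Rabs (sumR Lr (fun a => D a c * D a c')))).

Definition apply_D (Lc : nat) (D : nat -> nat -> R) (G : nat -> R) : nat -> R :=
  fun a => sumR Lc (fun c => D a c * G c).
Definition apply_DT (Lr : nat) (D : nat -> nat -> R) (V : nat -> R) : nat -> R :=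
  fun c => sumR Lr (fun a => D a c * V a).

Definition unit_columns (Lr Lc : nat) (D : nat -> nat -> R) : Prop :=
  forall c, (c < Lc)%nat -> sumR Lr (fun a => D a c ^ 2) = 1.

(* (stride) convolutional dictionary D_i : R^{N m_i} -> R^{N m_{i-1}}:
   column k*mc + r is local filter r (length np*mp) placed cyclically on rows
   k*mp, ..., k*mp + np*mp - 1 (mod N*mp), zero elsewhere. *)
Definition conv_dict (N mp mc np : nat) (D : nat -> nat -> R) : Prop :=
  exists f : nat -> nat -> R,
    forall a c, (a < N * mp)%nat -> (c < N * mc)%nat ->
      D a c = (let k := (c / mc)%nat in
               let r := (c mod mc)%nat in
               let t := ((a + N * mp - k * mp) mod (N * mp))%nat in
               if Nat.ltb t (np * mp) then f r t else 0).

Definition soft (beta z : R) : R :=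
  if Rlt_dec z (- beta) then z + beta
  else if Rle_dec z beta then 0 else z - beta.

Fixpoint layered (N : nat) (m : nat -> nat) (D : nat -> nat -> nat -> R)
    (beta : nat -> R) (Y : nat -> R) (i : nat) : nat -> R :=
  match i with
  | O => Y
  | S k => fun c => soft (beta (S k))
             (apply_DT (N * m k) (D (S k)) (layered N m D beta Y k) c)
  end.

Fixpoint eps (N : nat) (m n : nat -> nat) (D : nat -> nat -> nat -> R)
    (beta : nat -> R) (Gamma : nat -> nat -> R) (eps0 : R) (i : nat) : R :=
  match i with
  | O => eps0
  | S k =>
      sqrt (INR (norm0p N (m (S k)) (n (S k)) (Gamma (S k)))) *
      (eps N m n D beta Gamma eps0 k
       + mu (N * m k) (N * m (S k)) (D (S k))
         * (INR (norm0s N (m (S k)) (n k) (Gamma (S k))) - 1)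
         * gmax (N * m (S k)) (Gamma (S k))
       + beta (S k))
  end.

(* Main.v *)
Require Import Defs.
From Stdlib Require Import Reals Arith Lra Lia Psatz.
Open Scope R_scope.

Lemma sumR_ext n f g : (forall k, (k < n)%nat -> f k = g k) -> sumR n f = sumR n g.
Proof. induction n; simpl; intros H; [reflexivity|]. rewrite IHn by (intros; apply H; lia). rewrite H by lia. reflexivity. Qed.

Lemma sumR_plus n f g : sumR n (fun k => f k + g k) = sumR n f + sumR n g.
Proof. induction n; simpl; [lra|]. rewrite IHn; lra. Qed.

Lemma sumR_scal n c f : sumR n (fun k => c * f k) = c * sumR n f.
Proof. induction n; simpl; [lra|]. rewrite IHn; lra. Qed.

Lemma sumR_zero n : sumR n (fun _ => 0) = 0.
Proof. induction n; simpl; [lra|]. rewrite IHn; lra. Qed.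

Lemma sumR_swap n m F : sumR n (fun a => sumR m (fun b => F a b)) = sumR m (fun b => sumR n (fun a => F a b)).
Proof. induction n; simpl.
- rewrite sumR_zero; reflexivity.
- rewrite IHn, <- sumR_plus. reflexivity. Qed.

Lemma sumR_le n f g : (forall k, (k<n)%nat -> f k <= g k) -> sumR n f <= sumR n g.
Proof. induction n; simpl; intros H; [lra|]. pose proof (H n ltac:(lia)). pose proof (IHn ltac:(intros; apply H; lia)). lra. Qed.

Lemma sumR_abs n f : Rabs (sumR n f) <= sumR n (fun k => Rabs (f k)).
Proof. induction n; simpl. rewrite Rabs_R0; lra. eapply Rle_trans; [apply Rabs_triang|]. lra. Qed.

Lemma sumR_split n f c : (c < n)%nat -> sumR n f = f c + sumR n (fun a => if Nat.eqb a c then 0 else f a).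
Proof. induction n; intros Hc; [lia|]. simpl. destruct (Nat.eq_dec c n) as [->|Hne].
- rewrite Nat.eqb_refl. rewrite (sumR_ext n (fun a => if Nat.eqb a n then 0 else f a) f). lra.
  intros k Hk. destruct (Nat.eqb_spec k n); [lia|reflexivity].
- rewrite IHn by lia. destruct (Nat.eqb_spec n c); [lia|]. lra. Qed.

Lemma nz_true V a : nz V a = true <-> V a <> 0.
Proof. unfold nz; destruct (Req_EM_T (V a) 0); split; intros; try congruence; tauto. Qed.

Lemma sumR_cnt n P V x : sumR n (fun a => if andb (P a) (nz V a) then x else 0) = INR (cnt n P V) * x.
Proof. induction n; simpl sumR; simpl cnt; [simpl; lra|]. rewrite IHn.
destruct (andb (P n) (nz V n)); [rewrite plus_INR; simpl (INR 1)|rewrite Nat.add_0_r]; lra. Qed.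

Lemma maxR_ge n f k : (k<n)%nat -> f k <= maxR n f.
Proof. induction n; intros; [lia|]. simpl. destruct (Nat.eq_dec k n) as [->|]. apply Rmax_r.
eapply Rle_trans; [apply IHn; lia| apply Rmax_l]. Qed.
Lemma maxR_nonneg n f : 0 <= maxR n f.
Proof. induction n; simpl; [lra|]. eapply Rle_trans; [exact IHn|apply Rmax_l]. Qed.
Lemma maxR_le n f x : 0 <= x -> (forall k, (k<n)%nat -> f k <= x) -> maxR n f <= x.
Proof. induction n; simpl; intros; [lra|]. apply Rmax_lub; auto. Qed.
Lemma maxN_ge n f k : (k<n)%nat -> (f k <= Defs.maxN n f)%nat.
Proof. induction n; intros; [lia|]. simpl. destruct (Nat.eq_dec k n) as [->|]. lia.
specialize (IHn ltac:(lia)). lia. Qed.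

Lemma minnz_le L V init a : (a < L)%nat -> V a <> 0 -> minnz_aux L V init <= Rabs (V a).
Proof. induction L; intros; [lia|]. simpl. destruct (Nat.eq_dec a L) as [->|].
- assert (nz V L = true) by (apply nz_true; auto). rewrite H1. apply Rmin_l.
- specialize (IHL ltac:(lia) H0). destruct (nz V L); [|auto]. eapply Rle_trans; [apply Rmin_r|auto]. Qed.

Lemma mod_mul_add x q mp N : (0<N)%nat -> (q < mp)%nat -> ((x*mp + q) mod (N*mp) = (x mod N)*mp + q)%nat.
Proof. intros. symmetry. apply Nat.mod_unique with (q := (x / N)%nat).
- pose proof (Nat.mod_bound_pos x N ltac:(lia) H). nia.
- pose proof (Nat.div_mod_eq x N). nia. Qed.

Lemma patch_t N mp np k a : (0<N)%nat -> (0<mp)%nat -> (k<N)%nat -> (a < N*mp)%nat ->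
  (((a + N*mp - k*mp) mod (N*mp)) < np*mp)%nat -> ((a/mp + N - k) mod N < np)%nat.
Proof. intros. pose proof (Nat.div_mod_eq a mp). pose proof (Nat.mod_bound_pos a mp ltac:(lia) H0).
assert (a / mp < N)%nat by (apply Nat.Div0.div_lt_upper_bound; lia).
set (p := (a/mp)%nat) in *. set (q := (a mod mp)%nat) in *.
assert (Hr : ((a + N*mp - k*mp) = (p+N-k)*mp + q)%nat).
{ rewrite Nat.mul_sub_distr_r, Nat.mul_add_distr_r. nia. }
rewrite Hr, mod_mul_add in H3 by lia. nia. Qed.

Lemma mod2 N x : (0<N)%nat -> (x < 2*N)%nat -> (x < N /\ x mod N = x \/ N <= x /\ x mod N = x - N)%nat.
Proof. intros. destruct (Nat.lt_ge_cases x N). left; split; auto; apply Nat.mod_small; auto.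
right; split; auto. replace x with ((x-N) + 1*N)%nat at 1 by lia. rewrite Nat.Div0.mod_add.
apply Nat.mod_small; lia. Qed.

Lemma overlap N p k k' np : (0<N)%nat -> (p<N)%nat -> (k<N)%nat -> (k'<N)%nat ->
 ((p+N-k) mod N < np)%nat -> ((p+N-k') mod N < np)%nat ->
 ((k'+N-k) mod N < np \/ (k+N-k') mod N < np)%nat.
Proof. intros.
destruct (mod2 N (p+N-k)) as [[? E1]|[? E1]]; try lia; rewrite E1 in *;
destruct (mod2 N (p+N-k')) as [[? E2]|[? E2]]; try lia; rewrite E2 in *;
destruct (mod2 N (k'+N-k)) as [[? E3]|[? E3]]; try lia; rewrite E3 in *;
destruct (mod2 N (k+N-k')) as [[? E4]|[? E4]]; try lia; rewrite E4 in *; lia. Qed.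

Lemma D_support N mp mc np D a c : (0<N)%nat -> (0<mp)%nat -> (0<mc)%nat ->
  conv_dict N mp mc np D -> (a < N*mp)%nat -> (c < N*mc)%nat -> D a c <> 0 ->
  in_patch N mp np (c/mc) a = true.
Proof. intros HN Hmp Hmc [f Hf] Ha Hc HD. rewrite Hf in HD by assumption. cbv zeta in HD.
match type of HD with context [Nat.ltb ?x ?y] => destruct (Nat.ltb_spec x y) end; [|lra].
unfold in_patch. apply Nat.ltb_lt. apply patch_t; auto.
apply Nat.Div0.div_lt_upper_bound; lia. Qed.

Lemma ip_stripe N mp mc np D c c' : (0<N)%nat -> (0<mp)%nat -> (0<mc)%nat ->
  conv_dict N mp mc np D -> (c < N*mc)%nat -> (c' < N*mc)%nat ->
  sumR (N*mp) (fun a => D a c * D a c') <> 0 -> in_stripe N mc np (c/mc) c' = true.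
Proof. intros HN Hmp Hmc Hconv Hc Hc' Hs.
destruct (in_stripe N mc np (c/mc) c') eqn:Es; [reflexivity|]. exfalso; apply Hs.
rewrite <- (sumR_zero (N*mp)). apply sumR_ext. intros a Ha.
destruct (Req_dec (D a c) 0) as [E|E]; [rewrite E; lra|].
destruct (Req_dec (D a c') 0) as [E'|E']; [rewrite E'; lra|].
exfalso. pose proof (D_support _ _ _ _ _ _ _ HN Hmp Hmc Hconv Ha Hc E) as P1.
pose proof (D_support _ _ _ _ _ _ _ HN Hmp Hmc Hconv Ha Hc' E') as P2.
unfold in_patch in *. apply Nat.ltb_lt in P1, P2. unfold in_stripe in Es.
apply Bool.orb_false_iff in Es. destruct Es as [E1 E2]. apply Nat.ltb_ge in E1, E2.
assert (a / mp < N)%nat by (apply Nat.Div0.div_lt_upper_bound; lia).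
assert (c / mc < N)%nat by (apply Nat.Div0.div_lt_upper_bound; lia).
assert (c' / mc < N)%nat by (apply Nat.Div0.div_lt_upper_bound; lia).
destruct (overlap N (a/mp) (c/mc) (c'/mc) np) as [?|?]; auto; lia. Qed.

Lemma pt_ineq t x y : 0 < t -> 2 * t * (Rabs x * Rabs y) <= t*t * x^2 + y^2.
Proof. intros. rewrite <- (pow2_abs x), <- (pow2_abs y).
pose proof (pow2_ge_0 (t * Rabs x - Rabs y)). nra. Qed.

Lemma noise_bound N mp mc np D W c : (0<N)%nat -> (0<mp)%nat -> (0<mc)%nat ->
  conv_dict N mp mc np D -> unit_columns (N*mp) (N*mc) D -> (c < N*mc)%nat ->
  Rabs (sumR (N*mp) (fun a => D a c * W a)) <= norm2p N mp np W.
Proof. intros HN Hmp Hmc Hconv Hunit Hc.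
set (j := (c / mc)%nat). assert (Hj : (j < N)%nat) by (apply Nat.Div0.div_lt_upper_bound; lia).
set (W' := fun a => if in_patch N mp np j a then W a else 0).
set (S2 := sumR (N*mp) (fun a => if in_patch N mp np j a then W a ^ 2 else 0)).
assert (HS : sqrt S2 <= norm2p N mp np W).
{ unfold norm2p. apply (maxR_ge N (fun j => sqrt (sumR (N * mp)
    (fun a => if in_patch N mp np j a then W a ^ 2 else 0)))); auto. }
assert (E1 : sumR (N*mp) (fun a => D a c * W a) = sumR (N*mp) (fun a => D a c * W' a)).
{ apply sumR_ext. intros a Ha. unfold W'. destruct (in_patch N mp np j a) eqn:Ep; [reflexivity|].
  destruct (Req_dec (D a c) 0) as [E|E]; [rewrite E; lra|].
  pose proof (D_support _ _ _ _ _ _ _ HN Hmp Hmc Hconv Ha Hc E) as P; fold j in P; congruence. }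
assert (E2 : S2 = sumR (N*mp) (fun a => W' a ^ 2)).
{ apply sumR_ext. intros a Ha. unfold W'. destruct (in_patch N mp np j a); lra. }
assert (HS2 : 0 <= S2). { rewrite E2, <- (sumR_zero (N*mp)). apply sumR_le. intros; apply pow2_ge_0. }
rewrite E1. set (A := Rabs (sumR (N * mp) (fun a => D a c * W' a))).
assert (HA : forall t, 0 < t -> 2 * t * A <= t * t + S2).
{ intros t Ht. unfold A. eapply Rle_trans.
  { apply Rmult_le_compat_l. lra. apply sumR_abs. }
  rewrite <- sumR_scal.
  replace (t*t + S2) with (sumR (N*mp) (fun a => t * t * D a c ^ 2 + W' a ^ 2)).
  2:{ rewrite sumR_plus, sumR_scal, Hunit by auto. rewrite E2. lra. }
  apply sumR_le. intros a Ha. rewrite Rabs_mult. apply pt_ineq; auto. }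
eapply Rle_trans; [|exact HS].
pose proof (sqrt_sqrt S2 HS2). pose proof (sqrt_pos S2).
assert (0 <= A) by apply Rabs_pos.
destruct (Req_dec (sqrt S2) 0) as [Z|Z].
- destruct (Req_dec A 0) as [ZA|ZA]; [lra|].
  specialize (HA A ltac:(lra)). nra.
- specialize (HA (sqrt S2) ltac:(lra)). nra. Qed.

Lemma mu_bound Lr Lc D c c' : (c < Lc)%nat -> (c' < Lc)%nat -> c <> c' ->
  Rabs (sumR Lr (fun a => D a c * D a c')) <= mu Lr Lc D.
Proof. intros. unfold mu.
eapply Rle_trans; [|apply (maxR_ge Lc _ c); auto]. cbv beta.
eapply Rle_trans; [|apply (maxR_ge Lc _ c'); auto]. cbv beta.
destruct (Nat.eqb_spec c c'); [lia|lra]. Qed.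

Lemma gmax_bound L V a : (a < L)%nat -> Rabs (V a) <= gmax L V.
Proof. intros. unfold gmax. apply (maxR_ge L (fun a => Rabs (V a))); auto. Qed.

Lemma key N mp mc np D G Gp H W e c :
  (0<N)%nat -> (0<mp)%nat -> (0<mc)%nat -> (0<np)%nat ->
  conv_dict N mp mc np D -> unit_columns (N*mp) (N*mc) D ->
  (forall a, (a < N*mp)%nat -> Gp a = apply_D (N*mc) D G a) ->
  (forall a, (a < N*mp)%nat -> H a = Gp a + W a) ->
  norm2p N mp np W <= e -> (c < N*mc)%nat ->
  Rabs (apply_DT (N*mp) D H c - G c) <=
    mu (N*mp) (N*mc) D * gmax (N*mc) G *
      (INR (norm0s N mc np G) - (if nz G c then 1 else 0)) + e.
Proof. intros HN Hmp Hmc Hnp Hconv Hunit HGp HH HW Hc.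
set (k := (c / mc)%nat). assert (Hk : (k < N)%nat) by (apply Nat.Div0.div_lt_upper_bound; lia).
set (M := fun c' => sumR (N*mp) (fun a => D a c * D a c')).
set (T := fun c' => M c' * G c').
assert (E1 : apply_DT (N*mp) D H c = sumR (N*mc) T + sumR (N*mp) (fun a => D a c * W a)).
{ unfold apply_DT.
  rewrite (sumR_ext _ _ (fun a => sumR (N*mc) (fun c' => D a c * D a c' * G c') + D a c * W a)).
  2:{ intros a Ha. rewrite HH, HGp by auto. unfold apply_D. rewrite Rmult_plus_distr_l.
      rewrite <- sumR_scal. f_equal. apply sumR_ext. intros; lra. }
  rewrite sumR_plus, sumR_swap. f_equal. apply sumR_ext. intros c' _.
  unfold T, M. rewrite Rmult_comm, <- sumR_scal. apply sumR_ext; intros; lra. }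
assert (EM : M c = 1). { unfold M. rewrite <- (Hunit c Hc). apply sumR_ext; intros; lra. }
rewrite (sumR_split _ T c Hc) in E1. unfold T at 1 in E1. rewrite EM in E1.
set (mu0 := mu (N * mp) (N * mc) D) in *. set (gM := gmax (N * mc) G) in *.
assert (Hmu0 : 0 <= mu0) by apply maxR_nonneg.
assert (HgM : 0 <= gM) by apply maxR_nonneg.
set (g := fun c' => if andb (in_stripe N mc np k c') (nz G c') then mu0 * gM else 0).
assert (Hoff : Rabs (sumR (N*mc) (fun a => if Nat.eqb a c then 0 else T a)) <=
               sumR (N*mc) (fun a => if Nat.eqb a c then 0 else g a)).
{ eapply Rle_trans; [apply sumR_abs|]. apply sumR_le. intros c' Hc'.
  destruct (Nat.eqb_spec c' c); [rewrite Rabs_R0; lra|].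
  unfold T, g. destruct (Req_dec (M c') 0) as [Z|Z].
  { rewrite Z, Rmult_0_l, Rabs_R0. destruct (andb _ _); nra. }
  pose proof (ip_stripe _ _ _ _ _ _ _ HN Hmp Hmc Hconv Hc Hc' Z) as Hs. fold k in Hs. rewrite Hs.
  destruct (nz G c') eqn:Ez; simpl.
  - rewrite Rabs_mult. apply Rmult_le_compat; try apply Rabs_pos.
    apply mu_bound; auto. apply gmax_bound; auto.
  - assert (G c' = 0). { destruct (Req_dec (G c') 0); auto. apply nz_true in H0. congruence. }
    rewrite H0, Rmult_0_r, Rabs_R0; lra. }
pose proof (sumR_split _ g c Hc) as Es.
assert (Eg : sumR (N*mc) g = INR (cnt (N*mc) (in_stripe N mc np k) G) * (mu0 * gM)) by (unfold g; apply sumR_cnt).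
assert (Hsc : in_stripe N mc np k c = true).
{ unfold in_stripe. fold k. replace (k + N - k)%nat with N by lia. rewrite Nat.Div0.mod_same.
  apply Bool.orb_true_iff; right. apply Nat.ltb_lt; auto. }
replace (g c) with (if nz G c then mu0*gM else 0) in Es by (unfold g; rewrite Hsc; reflexivity).
assert (Hcnt : (cnt (N*mc) (in_stripe N mc np k) G <= norm0s N mc np G)%nat).
{ unfold norm0s. apply (maxN_ge N (fun j => cnt (N * mc) (in_stripe N mc np j) G)); auto. }
apply le_INR in Hcnt.
pose proof (noise_bound N mp mc np D W c HN Hmp Hmc Hconv Hunit Hc) as Hn.
rewrite E1. replace (1 * G c + _ + _ - G c) with
  (sumR (N * mc) (fun a => if Nat.eqb a c then 0 else T a) + sumR (N * mp) (fun a => D a c * W a)) by lra.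
eapply Rle_trans; [apply Rabs_triang|].
assert (0 <= mu0 * gM) by nra.
destruct (nz G c); nra. Qed.

Lemma soft_small b z : Rabs z < b -> soft b z = 0.
Proof. intros. unfold soft. unfold Rabs in H. destruct (Rcase_abs z);
destruct (Rlt_dec z (-b)); try lra; destruct (Rle_dec z b); lra. Qed.

Lemma soft_big b z : 0 <= b -> b < Rabs z -> soft b z <> 0 /\ Rabs (z - soft b z) <= b.
Proof. intros. unfold soft. unfold Rabs in H0. destruct (Rcase_abs z);
destruct (Rlt_dec z (-b)); try (split; [lra|]; replace (z - (z+b)) with (-b) by lra;
  rewrite Rabs_Ropp, Rabs_right; lra);
destruct (Rle_dec z b); try lra; split; [lra|]; replace (z - (z-b)) with b by lra;
  rewrite Rabs_right; lra. Qed.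

Lemma step N mp mc np nc D G Gp H W e beta :
  (0<N)%nat -> (0<mp)%nat -> (0<mc)%nat -> (0<np)%nat ->
  conv_dict N mp mc np D -> unit_columns (N*mp) (N*mc) D ->
  (forall a, (a < N*mp)%nat -> Gp a = apply_D (N*mc) D G a) ->
  (forall a, (a < N*mp)%nat -> H a = Gp a + W a) ->
  norm2p N mp np W <= e ->
  (exists c, (c < N*mc)%nat /\ G c <> 0) ->
  gmin (N*mc) G - (INR (norm0s N mc np G) - 1) * mu (N*mp) (N*mc) D * gmax (N*mc) G - e > beta /\
  beta > INR (norm0s N mc np G) * mu (N*mp) (N*mc) D * gmax (N*mc) G + e ->
  (forall c, (c < N*mc)%nat -> (G c <> 0 <-> soft beta (apply_DT (N*mp) D H c) <> 0)) /\
  norm2p N mc nc (fun c => G c - soft beta (apply_DT (N*mp) D H c)) <=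
    sqrt (INR (norm0p N mc nc G)) *
      (e + mu (N*mp) (N*mc) D * (INR (norm0s N mc np G) - 1) * gmax (N*mc) G + beta).
Proof. intros HN Hmp Hmc Hnp Hconv Hunit HGp HH HW Hnz [Hb1 Hb2].
set (mu0 := mu (N * mp) (N * mc) D) in *. set (gM := gmax (N * mc) G) in *.
set (s := INR (norm0s N mc np G)) in *.
set (B := e + mu0 * (s - 1) * gM + beta).
assert (Hmu0 : 0 <= mu0) by apply maxR_nonneg.
assert (HgM : 0 <= gM) by apply maxR_nonneg.
assert (Hs : 0 <= s) by apply pos_INR.
assert (He : 0 <= e) by (eapply Rle_trans; [apply maxR_nonneg|exact HW]).
assert (Hbeta : 0 <= beta). { assert (0 <= s * mu0 * gM) by (apply Rmult_le_pos; [apply Rmult_le_pos|]; auto). lra. }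
assert (Hc : forall c, (c < N*mc)%nat ->
   (G c = 0 -> soft beta (apply_DT (N*mp) D H c) = 0) /\
   (G c <> 0 -> soft beta (apply_DT (N*mp) D H c) <> 0 /\
                Rabs (G c - soft beta (apply_DT (N*mp) D H c)) <= B)).
{ intros c Hc. pose proof (key N mp mc np D G Gp H W e c HN Hmp Hmc Hnp Hconv Hunit HGp HH HW Hc) as K.
  fold mu0 gM s in K. set (Z := apply_DT (N * mp) D H c) in *. split.
  - intros Z0. assert (nz G c = false). { destruct (nz G c) eqn:Ez; auto. apply nz_true in Ez; contradiction. }
    rewrite H0, Z0 in K. apply soft_small. rewrite Rminus_0_r in K. nra.
  - intros Z0. assert (nz G c = true) by (apply nz_true; auto). rewrite H0 in K.
    assert (gmin (N*mc) G <= Rabs (G c)) by (apply minnz_le; auto).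
    pose proof (Rabs_triang_inv (G c) (G c - Z)).
    replace (G c - (G c - Z)) with Z in H2 by lra. rewrite <- Rabs_Ropp in K.
    replace (- (Z - G c)) with (G c - Z) in K by lra.
    destruct (soft_big beta Z) as [S1 S2]; auto. nra.
    split; auto. replace (G c - soft beta Z) with ((G c - Z) + (Z - soft beta Z)) by lra.
    eapply Rle_trans; [apply Rabs_triang|]. unfold B. nra. }
split.
- intros c Hc0. destruct (Hc c Hc0) as [C1 C2]. split; intros.
  + apply C2; auto.
  + intro Z0. apply H0, C1, Z0.
- destruct Hnz as [c0 [Hc0 Gc0]].
  assert (HB : 0 <= B). { destruct (Hc c0 Hc0) as [_ C2]. destruct (C2 Gc0). pose proof (Rabs_pos (G c0 - soft beta (apply_DT (N * mp) D H c0))). lra. }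
  unfold norm2p. apply maxR_le. apply Rmult_le_pos; [apply sqrt_pos|exact HB].
  intros j Hj. rewrite <- (sqrt_Rsqr B HB), <- sqrt_mult_alt by apply pos_INR.
  apply sqrt_le_1_alt.
  eapply Rle_trans with (sumR (N*mc) (fun a => if andb (in_patch N mc nc j a) (nz G a) then B² else 0)).
  + apply sumR_le. intros a Ha. destruct (Hc a Ha) as [C1 C2].
    destruct (in_patch N mc nc j a); simpl andb; [|lra].
    destruct (nz G a) eqn:Ez.
    * apply nz_true in Ez. destruct (C2 Ez) as [_ C3]. rewrite <- Rsqr_pow2. apply Rsqr_le_abs_1.
      rewrite (Rabs_right B); lra.
    * assert (G a = 0). { destruct (Req_dec (G a) 0); auto. apply nz_true in H0. congruence. }
      rewrite H0, C1 by auto. lra.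
  + rewrite sumR_cnt. apply Rmult_le_compat_r. apply Rle_0_sqr. apply le_INR.
    unfold norm0p. apply (maxN_ge N (fun j => cnt (N * mc) (in_patch N mc nc j) G)); auto. Qed.

Lemma maxR_ext n f g : (forall k, (k < n)%nat -> f k = g k) -> maxR n f = maxR n g.
Proof. induction n; simpl; intros H; [reflexivity|]. rewrite IHn by (intros; apply H; lia). rewrite H by lia. reflexivity. Qed.

Lemma norm2p_neg N m n V W : (forall a, V a = - W a) -> norm2p N m n V = norm2p N m n W.
Proof. intros HV. unfold norm2p. apply maxR_ext. intros j _.
f_equal. apply sumR_ext. intros a _. rewrite HV. destruct (in_patch N m n j a); lra. Qed.

Theorem theorem4
  (N K : nat) (m n : nat -> nat) (D : nat -> nat -> nat -> R)
  (X Y E : nat -> R) (Gamma : nat -> nat -> R) (beta : nat -> R) (eps0 : R)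
  (HN : (0 < N)%nat)
  (Hm0 : m O = 1%nat)
  (Hm : forall i, (i <= K)%nat -> (0 < m i)%nat)
  (Hn : forall i, (i < K)%nat -> (0 < n i)%nat /\ (n i <= N)%nat)
  (HDconv : forall i, (1 <= i <= K)%nat -> conv_dict N (m (i - 1)%nat) (m i) (n (i - 1)%nat) (D i))
  (HDunit : forall i, (1 <= i <= K)%nat -> unit_columns (N * m (i - 1)%nat) (N * m i) (D i))
  (HX : forall a, (a < N)%nat -> X a = apply_D (N * m 1%nat) (D 1%nat) (Gamma 1%nat) a)
  (HG : forall i, (2 <= i <= K)%nat -> forall a, (a < N * m (i - 1)%nat)%nat ->
          Gamma (i - 1)%nat a = apply_D (N * m i) (D i) (Gamma i) a)
  (Hnz : forall i, (1 <= i <= K)%nat -> exists a, (a < N * m i)%nat /\ Gamma i a <> 0)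
  (HY : forall a, (a < N)%nat -> Y a = X a + E a)
  (HE : norm2p N (m O) (n O) E <= eps0)
  (Ha : forall i, (1 <= i <= K)%nat ->
     0 < mu (N * m (i - 1)%nat) (N * m i) (D i) ->
     INR (norm0s N (m i) (n (i - 1)%nat) (Gamma i)) <
       / 2 * (1 + / mu (N * m (i - 1)%nat) (N * m i) (D i)
                  * (gmin (N * m i) (Gamma i) / gmax (N * m i) (Gamma i)))
       - / mu (N * m (i - 1)%nat) (N * m i) (D i)
         * (eps N m n D beta Gamma eps0 (i - 1)%nat / gmax (N * m i) (Gamma i)))
  (Hb : forall i, (1 <= i <= K)%nat ->
     gmin (N * m i) (Gamma i)
       - (INR (norm0s N (m i) (n (i - 1)%nat) (Gamma i)) - 1)
         * mu (N * m (i - 1)%nat) (N * m i) (D i) * gmax (N * m i) (Gamma i)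
       - eps N m n D beta Gamma eps0 (i - 1)%nat > beta i /\
     beta i > INR (norm0s N (m i) (n (i - 1)%nat) (Gamma i))
         * mu (N * m (i - 1)%nat) (N * m i) (D i) * gmax (N * m i) (Gamma i)
       + eps N m n D beta Gamma eps0 (i - 1)%nat) :
  forall i, (1 <= i <= K)%nat ->
    (forall a, (a < N * m i)%nat ->
       (Gamma i a <> 0 <-> layered N m D beta Y i a <> 0)) /\
    norm2p N (m i) (n i) (fun a => Gamma i a - layered N m D beta Y i a)
      <= eps N m n D beta Gamma eps0 i.
Proof.
intros [|k] Hi; [lia|]. induction k as [|k IH].
- assert (H1K : (1 <= 1 <= K)%nat) by lia.
  pose proof (HDconv 1%nat H1K) as Hc. pose proof (HDunit 1%nat H1K) as Hu.
  pose proof (Hb 1%nat H1K) as Hb1. simpl in Hc, Hu, Hb1.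
  apply (step N (m O) (m 1%nat) (n O) (n 1%nat) (D 1%nat) (Gamma 1%nat) X Y E eps0 (beta 1%nat)); auto.
  all: try (apply Hm; lia).
  { destruct (Hn 0%nat ltac:(lia)); lia. }
  all: intros a Ha'; rewrite Hm0 in Ha'; first [apply HX|apply HY]; lia.
- assert (HiK : (1 <= S (S k) <= K)%nat) by lia.
  destruct (IH ltac:(lia)) as [_ IH2].
  pose proof (HDconv _ HiK) as Hc. pose proof (HDunit _ HiK) as Hu.
  pose proof (Hb _ HiK) as Hb1. pose proof (HG (S (S k)) ltac:(lia)) as HG1.
  replace (S (S k) - 1)%nat with (S k) in Hc, Hu, Hb1, HG1 by lia.
  apply (step N (m (S k)) (m (S (S k))) (n (S k)) (n (S (S k))) (D (S (S k))) (Gamma (S (S k)))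
     (Gamma (S k)) (layered N m D beta Y (S k)) (fun a => layered N m D beta Y (S k) a - Gamma (S k) a)
     (eps N m n D beta Gamma eps0 (S k)) (beta (S (S k)))); auto.
  all: try (apply Hm; lia); try (intros; lra).
  { destruct (Hn (S k) ltac:(lia)); lia. }
  + rewrite (norm2p_neg _ _ _ _ (fun a => Gamma (S k) a - layered N m D beta Y (S k) a)); auto.
    intros; lra.
Qed.
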